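(* There do not exist positive rational numbers $x_1,x_2,x_3,d_1,d_2,d_3$ satisfying $$x_1^2+x_2^2+x_3^2=1,\quad x_2^2+x_3^2=d_1^2,\quad x_3^2+x_1^2=d_2^2,\quad x_1^2+x_2^2=d_3^2$$ together with a rational number $c$ such that $$e_{[1,1]}=c,\qquad e_{[0,1]}=c,\qquad e_{[1,0]}=c-1.$$ In other words, no rational perfect cuboid with unit space diagonal corresponds to the one-parameter family $E_{11}=c$, $E_{01}=c$, $E_{10}=c-1$ of rational solutions of the equation $(2E_{11})^2+(E_{01}^2+1-E_{10}^2)^2=8E_{01}^2$.
   Context: A rational perfect cuboid with unit space diagonal is a tuple of positive rationals $x_1,x_2,x_3$ (edges) and $d_1,d_2,d_3$ (face diagonals) satisfying $x_1^2+x_2^2+x_3^2=1$, $x_2^2+x_3^2=d_1^2$, $x_3^2+x_1^2=d_2^2$, $x_1^2+x_2^2=d_3^2$. (Integer perfect cuboids, i.e. cuboids with integer edges, integer face diagonals and integer space diagonal $L$, correspond to these after dividing by $L$.) The elementary multisymmetric polynomials used are $e_{[1,0]}=x_1+x_2+x_3$, $e_{[0,1]}=d_1+d_2+d_3$, and $e_{[1,1]}=x_1d_2+d_1x_2+x_2d_3+d_2x_3+x_3d_1+d_3x_1$. *)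

(* Defs.v *)
From HB Require Import structures.
From mathcomp Require Import all_boot all_order all_algebra.
Set Implicit Arguments. Unset Strict Implicit. Unset Printing Implicit Defensive.
Import Order.TTheory GRing.Theory Num.Theory.
Local Open Scope ring_scope.

Definition unit_perfect_cuboid (x1 x2 x3 d1 d2 d3 : rat) : Prop :=
  (0 < x1 /\ 0 < x2 /\ 0 < x3 /\ 0 < d1 /\ 0 < d2 /\ 0 < d3) /\
  [/\ x1 ^+ 2 + x2 ^+ 2 + x3 ^+ 2 = 1,
      x2 ^+ 2 + x3 ^+ 2 = d1 ^+ 2,
      x3 ^+ 2 + x1 ^+ 2 = d2 ^+ 2 &
      x1 ^+ 2 + x2 ^+ 2 = d3 ^+ 2].

Definition e10 (x1 x2 x3 : rat) : rat := x1 + x2 + x3.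
Definition e01 (d1 d2 d3 : rat) : rat := d1 + d2 + d3.
Definition e11 (x1 x2 x3 d1 d2 d3 : rat) : rat :=
  x1 * d2 + d1 * x2 + x2 * d3 + d2 * x3 + x3 * d1 + d3 * x1.

(* Main.v *)
Require Import Defs.
From HB Require Import structures.
From mathcomp Require Import all_boot all_order all_algebra.
From mathcomp Require Import ring lra.
Import Order.TTheory GRing.Theory Num.Theory.
Local Open Scope ring_scope.

Theorem theorem4p1 :
  ~ (exists (x1 x2 x3 d1 d2 d3 c : rat),
       unit_perfect_cuboid x1 x2 x3 d1 d2 d3 /\
       e11 x1 x2 x3 d1 d2 d3 = c /\
       e01 d1 d2 d3 = c /\
       e10 x1 x2 x3 = c - 1).
Proof.
move=> [x1 [x2 [x3 [d1 [d2 [d3 [c [[[p1 [p2 [p3 [q1 [q2 q3]]]]] [S D1 D2 D3]] [E11 [E01 E10]]]]]]]]]].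
rewrite /e11 /e01 /e10 in E11 E01 E10.
have n1 : x1^+2 + d1^+2 = 1 by lra.
have n2 : x2^+2 + d2^+2 = 1 by lra.
have n3 : x3^+2 + d3^+2 = 1 by lra.
set R2 := x1*x2 + x1*x3 + x2*x3 - d1*d2 - d1*d3 - d2*d3.
set I2 := x1 * d2 + d1 * x2 + x2 * d3 + d2 * x3 + x3 * d1 + d3 * x1.
set R3 := x1*x2*x3 - x1*d2*d3 - d1*x2*d3 - d1*d2*x3.
set I3 := x1*x2*d3 + x1*d2*x3 + d1*x2*x3 - d1*d2*d3.
have id1 : R3*R2 + I3*I2 - (x1+x2+x3) =
  x3*((x1^+2+d1^+2)*(x2^+2+d2^+2)-1) + x1*((x2^+2+d2^+2)*(x3^+2+d3^+2)-1)
  + x2*((x1^+2+d1^+2)*(x3^+2+d3^+2)-1) by rewrite /R3 /R2 /I3 /I2; ring.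
have id2 : I3*R2 - R3*I2 - (d1+d2+d3) =
  d3*((x1^+2+d1^+2)*(x2^+2+d2^+2)-1) + d1*((x2^+2+d2^+2)*(x3^+2+d3^+2)-1)
  + d2*((x1^+2+d1^+2)*(x3^+2+d3^+2)-1) by rewrite /R3 /R2 /I3 /I2; ring.
rewrite n1 n2 n3 !subrr !mulr0 !addr0 in id1 id2.
have hR2 : R2 = ((x1+x2+x3)^+2 - (x1^+2+x2^+2+x3^+2) - (d1+d2+d3)^+2
   + (d1^+2+d2^+2+d3^+2)) / 2 by rewrite /R2; field.
have sd : d1^+2+d2^+2+d3^+2 = 2 by lra.
rewrite S sd E01 E10 in hR2.
have hR2' : R2 = 1 - c by rewrite hR2; field.
rewrite hR2' E10 in id1; rewrite hR2' E01 in id2.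
have hI2 : I2 = c by rewrite /I2 -E11. rewrite hI2 in id1 id2.
have hc : 0 < (1-c)^+2 + c^+2.
  have : 1 < c by have := addr_gt0 (addr_gt0 p1 p2) p3; rewrite E10; lra.
  move=> c1; have : 0 < c^+2 by apply: exprn_gt0; lra.
  have : 0 <= (1-c)^+2 by apply: sqr_ge0.
  lra.
have r0 : (R3+1) * ((1-c)^+2 + c^+2) = 0.
  have -> : (R3+1) * ((1-c)^+2 + c^+2) = (1-c)*(R3*(1-c)+I3*c - (c-1)) - c*(I3*(1-c) - R3*c - c) by ring.
  by rewrite id1 id2 !mulr0 subrr.
have i0 : I3 * ((1-c)^+2 + c^+2) = 0.
  have -> : I3 * ((1-c)^+2 + c^+2) = c*(R3*(1-c)+I3*c - (c-1)) + (1-c)*(I3*(1-c) - R3*c - c) by ring.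
  by rewrite id1 id2 !mulr0 addr0.
have hcn : (1-c)^+2 + c^+2 != 0 by rewrite gt_eqF.
move/eqP: r0; rewrite mulf_eq0 (negPf hcn) orbF => /eqP r0.
move/eqP: i0; rewrite mulf_eq0 (negPf hcn) orbF => /eqP i0.
set p := x1*x2 - d1*d2. set q := x1*d2 + d1*x2.
have pq : p^+2 + q^+2 = 1.
  have -> : p^+2 + q^+2 = (x1^+2+d1^+2)*(x2^+2+d2^+2) by rewrite /p /q; ring.
  by rewrite n1 n2 mulr1.
have hx3 : x3 = - p.
  have -> : x3 = (p^+2+q^+2) * x3 by rewrite pq mul1r.
  have -> : (p^+2+q^+2) * x3 = p*R3 + q*I3 by rewrite /p /q /R3 /I3; ring.
  have -> : R3 = -1 by lra.
  by rewrite i0 mulr0 addr0 mulrN1.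
have key : 2*(x1*x2)*(x1*x2 - d1*d2) = 0.
  have e : x3^+2 = 1 - x1^+2 - x2^+2 by lra.
  rewrite hx3 /p sqrrN in e.
  have -> : 2*(x1*x2)*(x1*x2 - d1*d2) = (x1*x2 - d1*d2)^+2 - (1 - x1^+2 - x2^+2)
     - (d1^+2*d2^+2 - (1-x1^+2)*(1-x2^+2)) by ring.
  have hd1 : d1^+2 = 1 - x1^+2 by lra.
  have hd2 : d2^+2 = 1 - x2^+2 by lra.
  by rewrite e hd1 hd2 !subrr ?subr0.
have : 2*(x1*x2) != 0 by rewrite mulf_neq0 // gt_eqF // mulr_gt0.
move/eqP: key; rewrite mulf_eq0 => /orP [/eqP -> //|/eqP k].
have : x3 = 0 by rewrite hx3 /p k oppr0.
lra.
Qed.
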